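(* For $\alpha\in(0,\pi/2]$ and $d\in\mathbb{R}$ let $$f_\alpha(d)=960\alpha-8d^2(d^4-4d^2+20)\sin\alpha+d^2(3d^4-12d^2-4)\sin(2\alpha).$$ Then for every $\alpha\in(0,\pi/2]$, $f_\alpha(d)<0$ for all $d\in[5/2,\infty)$. *)

(* Defs.v *)
From Stdlib Require Import Reals Lra.
Open Scope R_scope.

Definition f_alpha (alpha d : R) : R :=
  960 * alpha - 8 * d ^ 2 * (d ^ 4 - 4 * d ^ 2 + 20) * sin alpha
  + d ^ 2 * (3 * d ^ 4 - 12 * d ^ 2 - 4) * sin (2 * alpha).

(* Main.v *)
Require Import Defs.
From Stdlib Require Import Reals.
From Stdlib Require Import Lra Psatz.
Open Scope R_scope.

Lemma slb a : sin_lb a = a - a^3/6 + a^5/120 - a^7/5040.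
Proof. unfold sin_lb, sin_approx, sin_term. cbn [sum_f_R0].
 rewrite !INR_IZR_INZ. simpl Z.of_nat. simpl Nat.mul. simpl Nat.add. field. Qed.
Lemma cub a : cos_ub a = 1 - a^2/2 + a^4/24 - a^6/720 + a^8/40320.
Proof. unfold cos_ub, cos_approx, cos_term. cbn [sum_f_R0].
 simpl Nat.mul. simpl Nat.add. rewrite (fact_simpl 7), mult_INR.
 rewrite !INR_IZR_INZ. simpl Z.of_nat. field. Qed.
Lemma c1 x : 3/2 < x -> x <= 2 -> 0 <= 1 - x^2/2 + x^4/24 - x^6/720 + x^8/40320 -> x <= 8/5.
Proof. intros. destruct (Rle_dec x (8/5)); auto. exfalso.
 set (u := x^2) in *. assert (Hu: 64/25 < u <= 4) by (unfold u; nra).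
 replace (x^4) with (u^2) in * by (unfold u; ring). replace (x^6) with (u^3) in * by (unfold u; ring).
 replace (x^8) with (u^4) in * by (unfold u; ring).
 assert (HF: 1/24 - u/720 + u^2/40320 <= 1/24 - (64/25)/720 + (64/25)^2/40320) by nra.
 assert (HG: u^2 * (1/24 - u/720 + u^2/40320) <= u^2 * (1/24 - (64/25)/720 + (64/25)^2/40320)).
 { apply Rmult_le_compat_l; nra. }
 assert ((u - 64/25)*(4-u) >= 0) by nra.
 nra. Qed.
Lemma c2 t : 0 <= t <= 64/25 ->
  480 < (1 - t/6 + t^2/120 - t^3/5040) * (612.890625 + 238.671875 * (t/2 - t^2/24)).
Proof. intros. nra. Qed.

Theorem lemma2 : forall alpha d : R,
  0 < alpha <= PI / 2 -> 5 / 2 <= d -> f_alpha alpha d < 0.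
Proof.
  intros a d [Ha0 Ha1] Hd.
  assert (Hpi : PI / 2 <= 8/5).
  { apply c1. apply PI2_3_2. generalize PI_4; lra.
    rewrite <- cub. rewrite <- cos_PI2.
    destruct (COS (PI/2)) as [_ H]; [generalize PI_RGT_0; lra | lra | ]. rewrite cos_PI2 in *; lra. }
  set (s := sin a). set (c := cos a). set (D := d^2).
  assert (HD : 25/4 <= D) by (unfold D; nra).
  set (K1 := D*(D^2 - 4*D + 84)). set (K2 := D*(3*D^2-12*D-4)).
  assert (HK1 : 612.890625 <= K1).
  { unfold K1. replace D with (25/4 + (D - 25/4)) by ring. set (e := D - 25/4).
    assert (0 <= e) by (unfold e; lra). nra. }
  assert (HK2 : 238.671875 <= K2).
  { unfold K2. replace D with (25/4 + (D - 25/4)) by ring. set (e := D - 25/4).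
    assert (0 <= e) by (unfold e; lra). nra. }
  assert (Hf : f_alpha a d = 960*a - 2*s*(K1 + K2*(1-c))).
  { unfold f_alpha, s, c, K1, K2, D. rewrite sin_2a. ring. }
  rewrite Hf.
  set (t := a^2).
  assert (Ht : 0 <= t <= 64/25) by (unfold t; nra).
  assert (Hs : a * (1 - t/6 + t^2/120 - t^3/5040) <= s).
  { destruct (SIN a) as [H _]; [lra | generalize PI_RGT_0; lra |].
    rewrite slb in H. unfold s, t. nra. }
  assert (Hc : t/2 - t^2/24 <= 1 - c).
  { destruct (COS a) as [_ H]; [generalize PI_RGT_0; lra | lra |].
    rewrite cub in H. fold c in H.
    replace (a^4) with (t^2) in H by (unfold t; ring).
    replace (a^6) with (t^3) in H by (unfold t; ring).
    replace (a^8) with (t^4) in H by (unfold t; ring).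
    assert (t^4/40320 <= t^3/720).
    { assert (0 <= t^3) by (apply pow_le; lra). nra. }
    fold t in H. lra. }
  assert (Hq0 : 0 <= t/2 - t^2/24) by nra.
  assert (Hp0 : 0 < 1 - t/6 + t^2/120 - t^3/5040) by nra.
  pose proof (c2 t Ht) as H2.
  assert (HB : 612.890625 + 238.671875 * (t/2 - t^2/24) <= K1 + K2*(1-c)).
  { assert (238.671875 * (t/2 - t^2/24) <= K2 * (1-c)).
    { apply Rmult_le_compat; lra. }
    lra. }
  assert (HB0 : 0 < 612.890625 + 238.671875 * (t/2 - t^2/24)) by lra.
  assert (a * (1 - t/6 + t^2/120 - t^3/5040) * (612.890625 + 238.671875 * (t/2 - t^2/24))
          <= s * (K1 + K2*(1-c))).
  { apply Rmult_le_compat; try nra. }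
  nra.
Qed.
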